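(* For probability measures $\mu$ on $\mathbb R$ with finite first moment set $a(x,\mu)=x\,I_{\{x\ge0\}}$ (the indicator function of $\{x\ge0\}$ times $x$), $b(x,\mu)=\int_{\mathbb R}(2y-x)\,\mu(dy)$, and $L_\mu u=a(x,\mu)u''+b(x,\mu)u'$. (a) For every compactly supported probability measure $\mu$, with $W(x,\mu)=\frac12\int_{\mathbb R}(x-2y)^2\,\mu(dy)$, one has $$\int_{\mathbb R}L_\mu W(x,\mu)\,\mu(dx)\le\frac12-\frac12\int_{\mathbb R}x^2\,\mu(dx),$$ where $L_\mu$ acts on $x\mapsto W(x,\mu)$. (b) There is no function $V\in C^2(\mathbb R)$ with $V\ge0$ and $V(x)\to+\infty$ as $|x|\to\infty$, together with positive numbers $C,\Lambda$, such that $\int_{\mathbb R}L_\mu V\,d\mu\le C-\Lambda\int_{\mathbb R}V\,d\mu$ for every compactly supported probability measure $\mu$ on $\mathbb R$. *)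

(* Defs.v *)
From HB Require Import structures.
From mathcomp Require Import all_boot all_order all_algebra.
From mathcomp Require Import all_classical all_reals all_analysis.
Set Implicit Arguments. Unset Strict Implicit. Unset Printing Implicit Defensive.
Import Order.TTheory GRing.Theory Num.Theory.
Import numFieldNormedType.Exports.
Local Open Scope classical_set_scope.
Local Open Scope ring_scope.

Definition compactly_supported (R : realType) (mu : probability R R) : Prop :=
  exists M : R, mu [set x : R | M < `|x|] = 0%E.

Definition coef_a (R : realType) (x : R) : R := if 0 <= x then x else 0.

Definition coef_b (R : realType) (x : R) (mu : probability R R) : R :=
  fine (\int[mu]_y ((2 * y - x)%R)%:E).

Definition Lop (R : realType) (mu : probability R R) (u : R -> R) (x : R) : R :=
  coef_a x * derive1 (derive1 u) x + coef_b x mu * derive1 u x.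

Definition Wfun (R : realType) (mu : probability R R) (x : R) : R :=
  2^-1 * fine (\int[mu]_y (((x - 2 * y) ^+ 2)%R)%:E).

Definition C2 (R : realType) (V : R -> R) : Prop :=
  (forall x, derivable V x 1) /\ (forall x, derivable (derive1 V) x 1) /\
  continuous (derive1 (derive1 V)).

Definition coercive (R : realType) (V : R -> R) : Prop :=
  forall A : R, exists N : R, forall x : R, N < `|x| -> A < V x.

(* Main.v *)
Require Import Defs.
From HB Require Import structures.
From mathcomp Require Import all_boot all_order all_algebra.
From mathcomp Require Import all_classical all_reals all_analysis.
From mathcomp Require Import measurable_realfun ring lra.
Import Order.TTheory GRing.Theory Num.Theory.
Import numFieldNormedType.Exports.
Local Open Scope classical_set_scope.
Local Open Scope ring_scope.

Lemma meas_out (R : realType) (M : R) : measurable [set x : R | M < `|x|].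
Proof.
have -> : [set x : R | M < `|x|] = setT `&` (Num.norm @^-1` `]M, +oo[%classic).
  by apply/seteqP; split => x /=; rewrite ?in_itv /= ?andbT; [move=> h; split|case].

exact: measurable_realfun.normr_measurable.
Qed.

Lemma int_of_bnd (R : realType) (mu : probability R R) (M K : R) (f : R -> R) :
  mu [set x | M < `|x|] = 0%E -> measurable_fun setT f ->
  (forall x, `|x| <= M -> `|f x| <= K) -> mu.-integrable setT (EFin \o f).
Proof.
move=> h0 mf hb; apply/integrableP; split; first exact/measurable_EFinP.
apply: (@le_lt_trans _ _ (`|K|%:E * mu setT)%E).
  apply: integral_le_bound => //.
  - exact/measurable_EFinP.
  - exists [set x | M < `|x|]; split => //; first exact: meas_out.
    move=> x /= hx; rewrite ltNge; apply/negP => hxM; apply: hx => _.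
    by rewrite lee_fin (le_trans (hb _ hxM)) // ler_norm.
by rewrite probability_setT mule1 ltry.
Qed.

Definition mom1 {R : realType} (mu : probability R R) := fine (\int[mu]_y (y%:E)).
Definition mom2 {R : realType} (mu : probability R R) := fine (\int[mu]_y ((y * y)%:E)).

Lemma meas_quad (R : realType) (a b c : R) :
  measurable_fun setT (fun y : R => a + b * y + c * (y * y)).
Proof.
apply: measurable_funD; first apply: measurable_funD; first exact: measurable_cst.
  by apply: measurable_funM; [exact: measurable_cst|exact: measurable_id].
apply: measurable_funM; first exact: measurable_cst.
by apply: measurable_funM; exact: measurable_id.
Qed.

Lemma int_quad_int (R : realType) (mu : probability R R) (M a b c : R) :
  mu [set x | M < `|x|] = 0%E ->
  mu.-integrable setT (EFin \o (fun y : R => a + b * y + c * (y * y))).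
Proof.
move=> h0; apply: (@int_of_bnd _ _ M (`|a| + `|b| * `|M| + `|c| * (`|M| * `|M|)) _ h0).
  exact: meas_quad.
move=> x hx; have hx' : `|x| <= `|M| by rewrite (le_trans hx) // ler_norm.
rewrite (le_trans (ler_normD _ _)) // lerD //.
  rewrite (le_trans (ler_normD _ _)) // lerD // normrM ler_wpM2l //.
rewrite !normrM ler_wpM2l // ler_pM //.
Qed.

Lemma int_quad (R : realType) (mu : probability R R) (M a b c : R) :
  mu [set x | M < `|x|] = 0%E ->
  (\int[mu]_y ((a + b * y + c * (y * y))%:E) = (a + b * mom1 mu + c * mom2 mu)%:E)%E.
Proof.
move=> h0.
have i1 : mu.-integrable setT (EFin \o (fun y : R => y)).
  apply: eq_integrable (@int_quad_int _ mu M 0 1 0 h0) => // y _.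
  by rewrite /= mul0r addr0 add0r mul1r.
have i2 : mu.-integrable setT (EFin \o (fun y : R => y * y)).
  apply: eq_integrable (@int_quad_int _ mu M 0 0 1 h0) => // y _.
  by rewrite /= mul0r !add0r mul1r.
have ic : mu.-integrable setT (EFin \o (fun y : R => a)).
  apply: eq_integrable (@int_quad_int _ mu M a 0 0 h0) => // y _.
  by rewrite /= !mul0r !addr0.
have e1 : (\int[mu]_y (y%:E) = (mom1 mu)%:E)%E.
  by rewrite /mom1 fineK //; exact: (integrable_fin_num _ i1).
have e2 : (\int[mu]_y ((y * y)%:E) = (mom2 mu)%:E)%E.
  by rewrite /mom2 fineK //; exact: (integrable_fin_num _ i2).
under eq_integral => y _ do rewrite !EFinD [(b * y)%:E]EFinM [(c * (y * y))%:E]EFinM.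
rewrite integralD //; first last.
- exact: integrableZl.
- apply: integrableD => //; exact: integrableZl.
rewrite integralD //; last exact: integrableZl.
rewrite integralZl // integralZl // e1 e2 integral_cst //.
set m := (X in (a%:E * X)%E). have -> : m = 1%E by exact: probability_setT.
by rewrite mule1 -!EFinM -!EFinD.
Qed.

Lemma dquad (R : realType) (a b c : R) :
  derive1 (fun x : R => a + b * x + c * x * x) = fun x => b + 2 * c * x.
Proof.
apply/funext => x; rewrite derive1E; apply: derive_val.
have -> : (fun x : R => a + b * x + c * x * x) = cst a + cst b * id + cst c * id * id.
  by apply/funext.
apply: is_derive_eq.
rewrite /= !scaler0 !addr0 !add0r; rewrite /GRing.scale /=.
have -> : (cst c * id) x = c * x by [].
ring.
Qed.

Lemma coef_aE (R : realType) : @coef_a R = fun x => 2^-1 * (x + `|x|).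
Proof.
apply/funext => x; rewrite /coef_a; case: ifPn => hx.
  by rewrite ger0_norm //; field.
by rewrite ltr0_norm ?ltNge // subrr mulr0.
Qed.

Lemma partA (R : realType) (mu : probability R R) : compactly_supported mu ->
     (\int[mu]_x (Lop mu (Wfun mu) x)%:E
        <= (2^-1)%:E - (2^-1)%:E * \int[mu]_x ((x ^+ 2)%R)%:E)%E.
Proof.
case=> M h0.
set m1 := mom1 mu; set m2 := mom2 mu.
have hb : forall x, coef_b x mu = 2 * m1 - x.
  move=> x; rewrite /coef_b (eq_integral (fun y : R => ((-x) + 2 * y + 0 * (y * y))%:E)).
    by rewrite (@int_quad _ mu M _ _ _ h0) /=; rewrite -/m1; ring.
  by move=> y _; congr (_%:E); ring.
have hW : Wfun mu = fun x => 2 * m2 + (- 2 * m1) * x + 2^-1 * x * x.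
  apply/funext => x; rewrite /Wfun.
  rewrite (eq_integral (fun y : R => (x * x + (- 4 * x) * y + 4 * (y * y))%:E)).
    by rewrite (@int_quad _ mu M _ _ _ h0) /= -/m1 -/m2; field.
  by move=> y _; congr (_%:E); ring.
have hd1 : derive1 (Wfun mu) = fun x => - 2 * m1 + 2 * 0 * x * x + 1 * x.
  rewrite hW dquad; apply/funext => x; by field.
have hd2 : derive1 (derive1 (Wfun mu)) = fun x => 1.
  rewrite hd1.
  have -> : (fun x : R => - 2 * m1 + 2 * 0 * x * x + 1 * x) =
            (fun x : R => - 2 * m1 + 1 * x + 0 * x * x).
    by apply/funext => x; ring.
  by rewrite dquad; apply/funext => x; ring.
have hL : forall x, Lop mu (Wfun mu) x = coef_a x + (2 * m1 - x) * (x - 2 * m1).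
  move=> x; rewrite /Lop hd2 hd1 hb; ring.
have hq : forall x, Lop mu (Wfun mu) x <=
    (2^-1 - 4 * m1 * m1) + 4 * m1 * x + (- 2^-1) * (x * x).
  move=> x; rewrite hL /coef_a.
  have h1 := sqr_ge0 (x - 1); have h2 := sqr_ge0 x.
  have e : (2^-1 : R) * 2 = 1 by rewrite mulVf.
  case: ifPn => hx; nra.
have iL : mu.-integrable setT (fun x => (Lop mu (Wfun mu) x)%:E).
  apply: (@int_of_bnd _ _ M (`|M| + (`|2 * m1| + `|M|) * (`|2 * m1| + `|M|)) _ h0).
    rewrite (_ : Lop mu (Wfun mu) = fun x => 2^-1 * (x + `|x|) + (2 * m1 - x) * (x - 2 * m1)).
      apply: measurable_funD.
        apply: measurable_funM; first exact: measurable_cst.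
        apply: measurable_funD; first exact: measurable_id.
        exact: measurable_realfun.normr_measurable.
      apply: measurable_funM.
        apply: measurable_funB; [exact: measurable_cst|exact: measurable_id].
      apply: measurable_funB; [exact: measurable_id|exact: measurable_cst].
    by apply/funext => x; rewrite hL coef_aE.
  move=> x hx; have hx' : `|x| <= `|M| by rewrite (le_trans hx) // ler_norm.
  rewrite hL (le_trans (ler_normD _ _)) // lerD //.
    rewrite /coef_a; case: ifPn => h; last by rewrite normr0.
    by [].
  rewrite normrM ler_pM //.
    by rewrite (le_trans (ler_normB _ _)) // lerD.
  by rewrite (le_trans (ler_normB _ _)) // addrC lerD.
apply: (le_trans (le_integral _ _ _ _)).
- exact: measurableT.
- exact: iL.
- exact: (@int_quad_int _ mu M (2^-1 - 4 * m1 * m1) (4 * m1) (- 2^-1) h0).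
- move=> x _; rewrite /= lee_fin. exact: hq.
rewrite (@int_quad _ mu M _ _ _ h0) -/m1 -/m2.
rewrite (eq_integral (fun y : R => (0 + 0 * y + 1 * (y * y))%:E)); last first.
  by move=> y _; congr (_%:E); ring.
rewrite (@int_quad _ mu M _ _ _ h0) -/m1 -/m2 -!EFinM -EFinB lee_fin.
lra.
Qed.

Lemma cont_of_der (R : realType) (f : R -> R) :
  (forall x, derivable f x 1) -> continuous f.
Proof.
move=> h x; apply/differentiable_continuous; rewrite -derivable1_diffP; exact: h.
Qed.

Lemma mC2 (R : realType) (V : R -> R) (c2 : continuous (derive1 (derive1 V))) :
  measurable_fun setT (derive1 (derive1 V)).
Proof. exact: (@continuous_measurable_fun R (derive1 (derive1 V)) c2). Qed.

Lemma mder (R : realType) (V : R -> R) : (forall x, derivable V x 1) ->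
  measurable_fun setT V.
Proof.
move=> h; apply: continuous_measurable_fun => x.
by apply/differentiable_continuous; rewrite -derivable1_diffP; exact: h.
Qed.

Lemma partB (R : realType) :
  ~ (exists (V : R -> R) (C Lam : R),
       [/\ C2 V, (forall x, 0 <= V x), coercive V, 0 < C /\ 0 < Lam &
        forall mu : probability R R, compactly_supported mu ->
          (\int[mu]_x (Lop mu V x)%:E
             <= C%:E - Lam%:E * \int[mu]_x (V x)%:E)%E]).
Proof.
case=> V [C [Lam [[d1 [d2 c2]] V0 coer [C0 L0] H]]].
have [N hN] := coer (C / Lam).
set z0 := - (`|N| + 1).
have [N' hN'] := coer (V z0).
set z1 := - (`|N| + `|N'| + 2).
have z10 : z1 < z0 by rewrite /z1 /z0; have := normr_ge0 N'; lra.
have Vz1 : V z0 < V z1.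
  apply: hN'; rewrite /z1 normrN ger0_norm; last by have := normr_ge0 N; have := normr_ge0 N'; lra.
  have := ler_norm N'; have := normr_ge0 N; lra.
have [c hc hmvt] : exists2 c, c \in `]z1, z0[ & V z0 - V z1 = derive1 V c * (z0 - z1).
  apply: MVT => //.
    by move=> x _; rewrite derive1E; apply: derivableP; exact: d1.
  by apply: derivable_within_continuous => x _; exact: d1.
move: hc; rewrite in_itv /= => /andP[hc1 hc2].
have hc0 : c < 0 by rewrite (lt_trans hc2) // /z0; have := normr_ge0 N; lra.
have hd : derive1 V c < 0.
  have : derive1 V c * (z0 - z1) < 0 by rewrite -hmvt subr_lt0.
  by rewrite pmulr_llt0 // subr_gt0.
have hVc : C / Lam < V c.
  apply: hN; rewrite ltr0_norm //; have := ler_norm N; rewrite /z0 in hc2; lra.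
have mV := @mder _ V d1.
have mV1 := @mder _ _ d2.
have mV2 := @mC2 _ V c2.
have hb : forall x, coef_b x \d_c = 2 * c - x.
  move=> x; rewrite /coef_b integral_dirac //; last first.
    apply/measurable_EFinP; apply: measurable_funB; last exact: measurable_cst.
    by apply: measurable_funM; [exact: measurable_cst|exact: measurable_id].
  by rewrite diracT mul1e.
have mL : measurable_fun setT (fun x => (Lop \d_c V x)%:E).
  apply/measurable_EFinP.
  rewrite (_ : Lop \d_c V = fun x => 2^-1 * (x + `|x|) * derive1 (derive1 V) x + (2 * c - x) * derive1 V x).
    apply: measurable_funD; apply: measurable_funM => //.
      apply: measurable_funM; first exact: measurable_cst.
      apply: measurable_funD; first exact: measurable_id.
      exact: measurable_realfun.normr_measurable.
    apply: measurable_funB; [exact: measurable_cst|exact: measurable_id].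
  by apply/funext => x; rewrite /Lop hb coef_aE.
have := H \d_c.
rewrite integral_dirac // integral_dirac //; last exact/measurable_EFinP.
rewrite diracT !mul1e -EFinM -EFinB lee_fin /Lop hb /coef_a.
have cs : compactly_supported \d_c.
  exists `|c|; change ((@dirac _ R c R) [set x | `|c| < `|x|] = 0%E); rewrite diracE.
  by rewrite memNset //= ltxx.
move=> /(_ cs).
have -> : (0 <= c) = false by rewrite leNgt hc0.
rewrite mul0r add0r.
have hL : C < V c * Lam by rewrite -ltr_pdivrMr.
have hp : 0 < c * derive1 V c by rewrite nmulr_rgt0.
have -> : 2 * c - c = c by ring.
lra.
Qed.

Theorem mainTheorem12 (R : realType) :
  (forall mu : probability R R, compactly_supported mu ->
     (\int[mu]_x (Lop mu (Wfun mu) x)%:E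
        <= (2^-1)%:E - (2^-1)%:E * \int[mu]_x ((x ^+ 2)%R)%:E)%E)
  /\
  ~ (exists (V : R -> R) (C Lam : R),
       [/\ C2 V, (forall x, 0 <= V x), coercive V, 0 < C /\ 0 < Lam &
        forall mu : probability R R, compactly_supported mu ->
          (\int[mu]_x (Lop mu V x)%:E
             <= C%:E - Lam%:E * \int[mu]_x (V x)%:E)%E]).
Proof.
split; [exact: partA | exact: partB].
Qed.
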